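(* Let $A$ be a finite set of alternatives, let ${\mathcal D}\subseteq {\mathcal L}(A)$ be a Condorcet domain, and let $a,b,c\in A$ be distinct. Suppose ${\mathcal D}$ contains a linear order $w=\ldots bc\ldots a\ldots$ in which $b$ immediately precedes $c$ and $a$ is ranked below $c$. Then $a$ is a right obstruction to the swap $bc\to cb$ if and only if ${\mathcal D}|_{\{a,b,c\}}$ satisfies $cN_{\{a,b,c\}}1$ or $bN_{\{a,b,c\}}2$ (or both), and satisfies no other never condition.
   Context: ${\mathcal L}(A)$ denotes the set of all linear orders on $A$; a linear order is written as a word listing alternatives from most preferred to least preferred. For ${\mathcal D}\subseteq{\mathcal L}(A)$ and $T\subseteq A$, the restriction ${\mathcal D}|_T$ is the set of restrictions to $T$ of the orders in ${\mathcal D}$. For a triple $T$, $x\in T$ and $i\in\{1,2,3\}$, the never condition $xN_T i$ says that in every order of ${\mathcal D}|_T$ the alternative $x$ is not in position $i$ (position 1 = top, 3 = bottom). A domain ${\mathcal D}$ is a Condorcet domain if for every triple $T\subseteq A$ the restriction ${\mathcal D}|_T$ satisfies at least one never condition (equivalently, every profile of orders from ${\mathcal D}$ with an odd number of voters has a transitive majority relation); a set of orders on a triple is Condorcet if it satisfies at least one never condition. Right obstruction: in an order $w=\ldots bc\ldots a\ldots\in{\mathcal D}$ (with $b$ immediately followed by $c$, and $a$ ranked below them), the alternative $a$ is a right obstruction to the swap $bc\to cb$ if ${\mathcal D}|_{\{a,b,c\}}\cup\{cba\}$ is not Condorcet. *)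

(* Defs.v *)
From mathcomp Require Import all_boot.
Set Implicit Arguments. Unset Strict Implicit. Unset Printing Implicit Defensive.

Section Condorcet.
Variable A : finType.

(* A linear order on A is a word listing every alternative exactly once,
   from most preferred (position 1) to least preferred. *)
Definition is_lorder (s : seq A) : bool := uniq s && (size s == #|A|).

Definition domain := seq A -> Prop.

Definition is_domain (D : domain) : Prop := forall s, D s -> is_lorder s.

Definition restr (T : {set A}) (s : seq A) : seq A := [seq x <- s | x \in T].

Definition restrD (D : domain) (T : {set A}) : seq A -> Prop :=
  fun t => exists2 s, D s & t = restr T s.

(* Never condition  x N_T i  for a set E of orders on the triple T:
   in every order of E, x is not in position i (positions 1,2,3). *)
Definition never (E : seq A -> Prop) (x : A) (i : nat) : Prop :=
  forall t, E t -> index x t != i.-1.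

Definition condorcet_on (T : {set A}) (E : seq A -> Prop) : Prop :=
  exists x, exists i, [/\ x \in T, 1 <= i <= 3 & never E x i].

Definition is_triple (T : {set A}) : bool := #|T| == 3.

Definition condorcet_domain (D : domain) : Prop :=
  is_domain D /\ forall T : {set A}, is_triple T -> condorcet_on T (restrD D T).

Definition right_obstruction (D : domain) (w : seq A) (a b c : A) : Prop :=
  [/\ D w,
      (exists w1 w2, w = w1 ++ b :: c :: w2 /\ a \in w2)
    & ~ condorcet_on [set a; b; c]
          (fun t => restrD D [set a; b; c] t \/ t = [:: c; b; a])].

End Condorcet.

(* Main.v *)
Require Import Defs.
From mathcomp Require Import all_boot.

Lemma idx_cba (A : finType) (a b c x : A) (i : nat) :
  a != b -> a != c -> b != c -> x \in [set a; b; c] -> 1 <= i <= 3 ->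
  index x [:: c; b; a] = i.-1 ->
  [\/ x = c /\ i = 1, x = b /\ i = 2 | x = a /\ i = 3].
Proof.
move=> ab ac bc; rewrite !inE => /orP[/orP[]|]/eqP-> /andP[i1 i3] /=.
- rewrite eq_sym (negbTE ac) eq_sym (negbTE ab) eqxx.
  by case: i i1 i3 => [|[|[|[|]]]] //= _ _ _; constructor 3.
- rewrite eq_sym (negbTE bc) eqxx.
  by case: i i1 i3 => [|[|[|[|]]]] //= _ _ _; constructor 2.
- rewrite eqxx.
  by case: i i1 i3 => [|[|[|[|]]]] //= _ _ _; constructor 1.
Qed.

Theorem proposition1 (A : finType) (D : seq A -> Prop) (a b c : A) (w : seq A) :
  condorcet_domain D ->
  a != b -> a != c -> b != c ->
  D w ->
  (exists w1 w2, w = w1 ++ b :: c :: w2 /\ a \in w2) ->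
  (right_obstruction D w a b c <->
    ((never (restrD D [set a; b; c]) c 1 \/ never (restrD D [set a; b; c]) b 2) /\
     (forall (x : A) (i : nat), x \in [set a; b; c] -> 1 <= i <= 3 ->
        never (restrD D [set a; b; c]) x i ->
        (x = c /\ i = 1) \/ (x = b /\ i = 2)))).
Proof.
move=> [Hdom Hcd] ab ac bc Dw Hdec.
set T := [set a; b; c].
have Tt : is_triple T.
  rewrite /is_triple /T setUC cardsU1 !inE cards2.
  by rewrite (eq_sym c a) (negbTE ac) (eq_sym c b) (negbTE bc) ab.
have Ha : restrD D T (restr T w) /\ index a (restr T w) = 2.
  split; first by exists w.
  case: Hdec => w1 [w2 [ew aw2]].
  have := Hdom _ Dw; rewrite /is_lorder ew => /andP[u _].
  have [u1 hn u2] : [/\ uniq w1, ~~ has (mem w1) (b::c::w2) & uniq (b::c::w2)].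
    by apply/and3P; rewrite -cat_uniq.
  have bw1 : b \notin w1 by apply: (hasPn hn); rewrite inE eqxx.
  have cw1 : c \notin w1 by apply: (hasPn hn); rewrite !inE eqxx orbT.
  have aw1 : a \notin w1 by apply: (hasPn hn); rewrite !inE aw2 !orbT.
  move: u2 => /= /and3P[]; rewrite inE negb_or => /andP[_ bw2] cw2 _.
  have f1 : [seq x <- w1 | x \in T] = [::].
    rewrite -(filter_pred0 w1); apply: eq_in_filter => x xw1.
    rewrite /T !inE; apply/negP => /orP[/orP[]|] /eqP ex; subst x.
    - by rewrite xw1 in aw1.
    - by rewrite xw1 in bw1.
    - by rewrite xw1 in cw1.
  rewrite /restr filter_cat f1 /= /T !inE !eqxx !orbT /= -/T.
  rewrite (eq_sym b a) (negbTE ab) (eq_sym c a) (negbTE ac).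
  case e : [seq x <- w2 | x \in T] => [|x r].
    by have := mem_filter (fun x => x \in T) a w2; rewrite e /T !inE eqxx aw2.
  have : x \in [seq x <- w2 | x \in T] by rewrite e inE eqxx.
  rewrite mem_filter /T !inE => /andP[/orP[/orP[]|] /eqP ex xw2]; subst x.
  - by rewrite /= ?eqxx.
  - by rewrite xw2 in bw2.
  - by rewrite xw2 in cw2.
case: Ha => [Rw Iw].
have key : forall x i, x \in T -> 1 <= i <= 3 -> never (restrD D T) x i ->
    ~ condorcet_on T (fun t => restrD D T t \/ t = [:: c; b; a]) ->
    (x = c /\ i = 1) \/ (x = b /\ i = 2).
  move=> x i xT hi nv ncd.
  case: (boolP (index x [:: c; b; a] == i.-1)) => h.
  - case: (@idx_cba _ a b c x i ab ac bc xT hi (eqP h)) => [[-> ->]|[-> ->]|[ex ei]].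
    + by left.
    + by right.
    + by subst; have := nv _ Rw; rewrite Iw.
  - exfalso; apply: ncd; exists x, i; split => //.
    by move=> t [Et|->] //; exact: nv.
split.
- case=> _ _ ncd; have [x [i [xT hi nv]]] := Hcd T Tt; split.
    by case: (key x i xT hi nv ncd) => [[ex ei]|[ex ei]]; subst; [left|right].
  by move=> x' i' xT' hi' nv'; exact: key.
- case=> _ H; split => //; move=> [x [i [xT hi nv]]].
  have nvE : never (restrD D T) x i by move=> t Et; apply: nv; left.
  have := nv [:: c; b; a] (or_intror erefl).
  case: (H x i xT hi nvE) => [[-> ->]|[-> ->]] /=; first by rewrite eqxx.
  by rewrite (eq_sym c b) (negbTE bc) eqxx.
Qed.
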